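(* Let $n\ge2$, let $P$ and $H$ be partial $n$-Metrics on sets $X$ and $Y$ respectively, and let $f,g:X\to Y$. Suppose there are real numbers $r$, $A\ge0$ and $0<c<1$ such that for every $x\in X$ there exists $z\in X$ with $$H(\langle f(z)\rangle^{n-1},g(z))-H(\langle f(z)\rangle^n)\le c\big[H(\langle f(x)\rangle^{n-1},g(x))-H(\langle f(x)\rangle^n)\big]$$ and $$r\le P(\langle z\rangle^n)\le P(\langle z\rangle^{n-1},x)\le r+A\big[H(\langle f(x)\rangle^{n-1},g(x))-H(\langle f(x)\rangle^n)\big]$$ (i.e. $f$ and $g$ are $f$-mutually $c_r$-contractive). Then there exists a Cauchy sequence $\{x_i\}_{i\in\mathbb{N}}$ in $X$ with central distance $r$ such that $r\le P(\langle x_i\rangle^n)$ for all $i$, and such that for every $\epsilon>0$ there is $N\in\mathbb{N}$ with $H(\langle f(x_i)\rangle^{n-1},g(x_i))-H(\langle f(x_i)\rangle^n)<\epsilon$ for all $i>N$.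
   Context: Notation: $\langle a\rangle^k$ denotes the $k$-tuple $(a,\dots,a)$ inserted into an argument list. A partial $n$-Metric on a set $X$ is a function $P:X^n\to\mathbb{R}$ such that for all $x_1,\dots,x_n,a\in X$: (1) $P(\langle x_1\rangle^n)\le P(\langle x_1\rangle^{n-1},x_2)$; (2) $P$ is invariant under permutations of its arguments; (3) $P(\langle x_1\rangle^{n-1},x_2)=P(\langle x_1\rangle^n)$ and $P(\langle x_2\rangle^{n-1},x_1)=P(\langle x_2\rangle^n)$ iff $x_1=x_2$; (4) $P(x_1,\dots,x_n)\le P(x_1,\dots,x_{n-1},a)+P(\langle a\rangle^{n-1},x_n)-P(\langle a\rangle^n)$. A sequence $\{x_i\}$ is Cauchy with central distance $r$ if for every $\epsilon>0$ there is $N$ with $|P(x_{i_1},\dots,x_{i_n})-r|<\epsilon$ for all $i_1,\dots,i_n>N$. *)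

(* Defs.v *)
From Stdlib Require Import Reals List Permutation.
Open Scope R_scope.

(* A partial n-Metric on X: P is a function on n-tuples, represented as
   lists of length n (values on lists of other lengths are irrelevant).
   <a>^k is [repeat a k]. *)
Definition is_partial_nMetric {X : Type} (n : nat) (P : list X -> R) : Prop :=
  (forall x1 x2 : X, P (repeat x1 n) <= P (repeat x1 (n - 1) ++ x2 :: nil)) /\
  (forall l l' : list X, length l = n -> Permutation l l' -> P l = P l') /\
  (forall x1 x2 : X,
      (P (repeat x1 (n - 1) ++ x2 :: nil) = P (repeat x1 n) /\
       P (repeat x2 (n - 1) ++ x1 :: nil) = P (repeat x2 n)) <-> x1 = x2) /\
  (forall (l : list X) (xn a : X), length l = (n - 1)%nat ->
      P (l ++ xn :: nil) <= P (l ++ a :: nil) + P (repeat a (n - 1) ++ xn :: nil)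
                             - P (repeat a n)).

Definition cauchy_central {X : Type} (n : nat) (P : list X -> R)
    (x : nat -> X) (r : R) : Prop :=
  forall eps : R, eps > 0 -> exists N : nat,
    forall idx : list nat, length idx = n -> Forall (fun i => (N < i)%nat) idx ->
      Rabs (P (map x idx) - r) < eps.

Definition fg_gap {X Y : Type} (n : nat) (H : list Y -> R) (f g : X -> Y) (x : X) : R :=
  H (repeat (f x) (n - 1) ++ g x :: nil) - H (repeat (f x) n).

(* Main.v *)
Require Import Defs.
From Stdlib Require Import Reals List Permutation.
From Stdlib Require Import ClassicalEpsilon Lia Lra.
Open Scope R_scope.

Definition dd {X : Type} (n : nat) (P : list X -> R) (a b : X) : R :=
  P (repeat a (n - 1) ++ b :: nil) - P (repeat a n).

Lemma rep_last {X : Type} (a : X) m : repeat a m ++ a :: nil = repeat a (S m).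
Proof. induction m; simpl; [reflexivity | rewrite IHm; reflexivity]. Qed.

Lemma up_lem {X : Type} (n : nat) (P : list X -> R) (HP : is_partial_nMetric n P)
  (a : X) (e : R) : forall u, (length u <= n)%nat ->
  Forall (fun t => dd n P a t <= e) u ->
  P (repeat a (n - length u) ++ u) <= P (repeat a n) + INR (length u) * e.
Proof.
  induction u as [|t u IH]; intros Hl Hf.
  - simpl. rewrite Nat.sub_0_r, app_nil_r. lra.
  - inversion Hf as [|? ? Ht Hu]; subst. simpl length in *.
    pose proof HP as (_ & Hperm & _ & Htri).
    set (m := (n - S (length u))%nat).
    assert (Hm : (n - length u = S m)%nat) by (unfold m; lia).
    assert (E1 : P (repeat a m ++ t :: u) = P ((repeat a m ++ u) ++ t :: nil)).
    { apply Hperm. rewrite length_app, repeat_length; simpl; unfold m; lia.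
      rewrite <- app_assoc. apply Permutation_app_head. apply Permutation_cons_append. }
    assert (E2 : P ((repeat a m ++ u) ++ a :: nil) = P (repeat a (S m) ++ u)).
    { apply Hperm. rewrite !length_app, repeat_length; simpl; unfold m; lia.
      rewrite <- rep_last, <- !app_assoc. apply Permutation_app_head.
      simpl. apply Permutation_sym, Permutation_cons_append. }
    assert (T := Htri (repeat a m ++ u) t a).
    assert (Hlen : length (repeat a m ++ u) = (n - 1)%nat)
      by (rewrite length_app, repeat_length; unfold m; lia).
    specialize (T Hlen). specialize (IH ltac:(lia) Hu).
    rewrite Hm in IH. rewrite S_INR. unfold dd in Ht. lra.
Qed.

Lemma low_lem {X : Type} (n : nat) (P : list X -> R) (HP : is_partial_nMetric n P)
  (y : X) (e : R) : forall u, (length u <= n)%nat ->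
  Forall (fun t => dd n P t y <= e) u ->
  P (repeat y n) <= P (repeat y (n - length u) ++ u) + INR (length u) * e.
Proof.
  induction u as [|t u IH]; intros Hl Hf.
  - simpl. rewrite Nat.sub_0_r, app_nil_r. lra.
  - inversion Hf as [|? ? Ht Hu]; subst. simpl length in *.
    pose proof HP as (_ & Hperm & _ & Htri).
    set (m := (n - S (length u))%nat).
    assert (Hm : (n - length u = S m)%nat) by (unfold m; lia).
    assert (E1 : P (repeat y m ++ t :: u) = P ((repeat y m ++ u) ++ t :: nil)).
    { apply Hperm. rewrite length_app, repeat_length; simpl; unfold m; lia.
      rewrite <- app_assoc. apply Permutation_app_head. apply Permutation_cons_append. }
    assert (E2 : P ((repeat y m ++ u) ++ y :: nil) = P (repeat y (S m) ++ u)).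
    { apply Hperm. rewrite !length_app, repeat_length; simpl; unfold m; lia.
      rewrite <- rep_last, <- !app_assoc. apply Permutation_app_head.
      simpl. apply Permutation_sym, Permutation_cons_append. }
    assert (T := Htri (repeat y m ++ u) y t).
    assert (Hlen : length (repeat y m ++ u) = (n - 1)%nat)
      by (rewrite length_app, repeat_length; unfold m; lia).
    specialize (T Hlen). specialize (IH ltac:(lia) Hu).
    rewrite Hm in IH. rewrite S_INR. unfold dd in Ht. lra.
Qed.

Lemma pow_le1 (c : R) : 0 <= c -> c <= 1 -> forall p, c ^ p <= 1.
Proof.
  intros H0 H1; induction p; simpl. lra.
  assert (0 <= c ^ p) by (apply pow_le; lra). nra.
Qed.

Lemma pow_mono (c : R) : 0 <= c -> c <= 1 -> forall k m, (k <= m)%nat -> c ^ m <= c ^ k.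
Proof.
  intros H0 H1 k m Hkm. replace m with (k + (m - k))%nat by lia.
  rewrite pow_add. assert (0 <= c ^ k) by (apply pow_le; lra).
  assert (c ^ (m - k) <= 1) by (apply pow_le1; lra). nra.
Qed.

Theorem theorem5p14 (X Y : Type) (n : nat) (P : list X -> R) (H : list Y -> R)
  (f g : X -> Y) (r A c : R) :
  (2 <= n)%nat -> inhabited X ->
  is_partial_nMetric n P -> is_partial_nMetric n H ->
  0 <= A -> 0 < c -> c < 1 ->
  (forall x : X, exists z : X,
      fg_gap n H f g z <= c * fg_gap n H f g x /\
      r <= P (repeat z n) /\
      P (repeat z n) <= P (repeat z (n - 1) ++ x :: nil) /\
      P (repeat z (n - 1) ++ x :: nil) <= r + A * fg_gap n H f g x) ->
  exists xs : nat -> X,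
    cauchy_central n P xs r /\
    (forall i : nat, r <= P (repeat (xs i) n)) /\
    (forall eps : R, eps > 0 -> exists N : nat,
        forall i : nat, (N < i)%nat -> fg_gap n H f g (xs i) < eps).
Proof.
  intros Hn [x0] HP HH HA Hc0 Hc1 Hz.
  set (zf := fun x => proj1_sig (constructive_indefinite_description _ (Hz x))).
  assert (Hzf : forall x, fg_gap n H f g (zf x) <= c * fg_gap n H f g x /\
      r <= P (repeat (zf x) n) /\
      P (repeat (zf x) n) <= P (repeat (zf x) (n - 1) ++ x :: nil) /\
      P (repeat (zf x) (n - 1) ++ x :: nil) <= r + A * fg_gap n H f g x).
  { intro x. unfold zf. destruct (constructive_indefinite_description _ (Hz x)); simpl; auto. }
  set (s := fun i => nat_rect (fun _ => X) x0 (fun _ x => zf x) i).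
  assert (sS : forall i, s (S i) = zf (s i)) by reflexivity.
  set (D := fun x => fg_gap n H f g x).
  assert (Dnn : forall x, 0 <= D x).
  { intro x. destruct HH as (H1 & _). specialize (H1 (f x) (g x)).
    unfold D, fg_gap. lra. }
  set (D0 := D (s 0%nat)).
  assert (cpos0 : forall k, 0 <= c ^ k) by (intro; apply pow_le; lra).
  assert (D0nn : 0 <= D0) by apply Dnn.
  assert (Dbound : forall i, D (s i) <= D0 * c ^ i).
  { induction i. rewrite pow_O, Rmult_1_r. unfold D0. lra.
    rewrite sS. destruct (Hzf (s i)) as (Hd & _).
    change (D (zf (s i)) <= c * D (s i)) in Hd.
    change (D (zf (s i)) <= D0 * (c * c ^ i)).
    pose proof (cpos0 i). assert (c * D (s i) <= c * (D0 * c ^ i)) by (apply Rmult_le_compat_l; lra). lra. }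
  assert (Plow : forall i, r <= P (repeat (s (S i)) n)).
  { intro i. rewrite sS. apply (Hzf (s i)). }
  assert (Pup : forall i, P (repeat (s (S i)) n) <= r + A * D (s i)).
  { intro i. rewrite sS. destruct (Hzf (s i)) as (_ & _ & h1 & h2). unfold D. lra. }
  assert (dstep : forall i, dd n P (s (S i)) (s i) <= A * D (s i)).
  { intro i. unfold dd. rewrite sS. destruct (Hzf (s i)) as (_ & h0 & _ & h2).
    unfold D. lra. }
  assert (dnn : forall a b, 0 <= dd n P a b).
  { intros a b. destruct HP as (H1 & _). specialize (H1 a b). unfold dd. lra. }
  assert (dtri : forall a b d, dd n P a d <= dd n P a b + dd n P b d).
  { intros a b d. destruct HP as (_ & _ & _ & H4).
    specialize (H4 (repeat a (n - 1)) d b (repeat_length _ _)). unfold dd. lra. }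
  assert (drefl : forall a, dd n P a a = 0).
  { intro a. unfold dd. rewrite rep_last. replace (S (n - 1)) with n by lia. ring. }
  set (K := A * D0 / (1 - c)).
  assert (KE : K * (1 - c) = A * D0) by (unfold K; field; lra).
  assert (Knn : 0 <= K).
  { unfold K. unfold Rdiv. apply Rmult_le_pos. apply Rmult_le_pos; lra.
    left. apply Rinv_0_lt_compat. lra. }
  assert (cpos : forall k, 0 <= c ^ k) by (intro; apply pow_le; lra).
  assert (AD : forall i, A * D (s i) <= K * c ^ i).
  { intro i. specialize (Dbound i). specialize (cpos i).
    assert (A * D (s i) <= A * D0 * c ^ i) by nra.
    assert (K * c ^ i - A * D0 * c ^ i = K * c * c ^ i) by (rewrite <- KE; ring).
    assert (0 <= K * c * c ^ i). { apply Rmult_le_pos; auto. nra. }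
    lra. }
  assert (Dist : forall p k, dd n P (s (k + p)%nat) (s k) <= K * c ^ k).
  { induction p; intro k.
    - rewrite Nat.add_0_r, drefl. apply Rmult_le_pos; auto.
    - replace (k + S p)%nat with (S k + p)%nat by lia.
      specialize (dtri (s (S k + p)%nat) (s (S k)) (s k)).
      specialize (IHp (S k)). specialize (dstep k). specialize (Dbound k).
      specialize (cpos k).
      assert (HAD : A * D (s k) <= A * D0 * c ^ k) by nra.
      change (c ^ S k) with (c * c ^ k) in IHp. rewrite <- KE in HAD.
      assert (K * (c * c ^ k) + K * (1 - c) * c ^ k = K * c ^ k) by ring.
      lra. }
  assert (Dist' : forall m k, (k <= m)%nat -> dd n P (s m) (s k) <= K * c ^ k).
  { intros m k Hkm. replace m with (k + (m - k))%nat by lia. apply Dist. }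
  assert (Habs : Rabs c < 1) by (rewrite Rabs_right; lra).
  exists (fun i => s (S i)). split; [|split].
  - intros eps He.
    assert (Hy : 0 < eps / ((INR n + 1) * (K + 1))).
    { apply Rdiv_lt_0_compat. lra. apply Rmult_lt_0_compat.
      pose proof (pos_INR n). lra. lra. }
    destruct (pow_lt_1_zero c Habs _ Hy) as [N0 HN0].
    exists N0. intros idx Hlen Hall.
    set (k := S N0).
    set (u := map (fun i => s (S i)) idx).
    assert (Hlu : length u = n) by (unfold u; rewrite length_map; auto).
    assert (Hck : c ^ k < eps / ((INR n + 1) * (K + 1))).
    { specialize (HN0 k ltac:(unfold k; lia)). rewrite Rabs_right in HN0; auto.
      apply Rle_ge, cpos. }
    assert (L : P (repeat (s k) n) <= P u + INR n * (K * c ^ k)).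
    { pose proof (low_lem n P HP (s k) (K * c ^ k) u ltac:(lia)) as LL.
      rewrite Hlu, Nat.sub_diag in LL. cbn [repeat app] in LL. apply LL.
      unfold u. apply Forall_map. eapply Forall_impl; [|exact Hall].
      intros i Hi. cbv beta. apply Dist'. cbv beta in Hi; unfold k; lia. }
    assert (L2 : r <= P (repeat (s k) n)) by (unfold k; apply Plow).
    set (m := list_max (map S idx)).
    assert (Hm : Forall (fun j => (j <= m)%nat) (map S idx)) by (apply list_max_le; lia).
    assert (U : P u <= P (repeat (s (S m)) n) + INR n * (K * c ^ k)).
    { pose proof (up_lem n P HP (s (S m)) (K * c ^ k) u ltac:(lia)) as LL.
      rewrite Hlu, Nat.sub_diag in LL. cbn [repeat app] in LL. apply LL.
      unfold u. apply Forall_map. apply Forall_map in Hm.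
      rewrite Forall_forall in Hm, Hall |- *. intros i Hi.
      specialize (Hm i Hi). specialize (Hall i Hi).
      eapply Rle_trans. apply Dist'. lia.
      apply Rmult_le_compat_l; auto. apply pow_mono; try lra. unfold k; lia. }
    assert (U2 : P (repeat (s (S m)) n) <= r + K * c ^ k).
    { eapply Rle_trans. apply Pup. specialize (AD m).
      assert (K * c ^ m <= K * c ^ k).
      { apply Rmult_le_compat_l; auto. apply pow_mono; try lra.
        destruct idx as [|i0 idx']. simpl in Hlen; lia.
        inversion Hm; subst. inversion Hall; subst. unfold k; lia. }
      lra. }
    assert (Bnd : (INR n + 1) * (K * c ^ k) < eps).
    { assert (Hpos : 0 < (INR n + 1) * (K + 1)).
      { apply Rmult_lt_0_compat. pose proof (pos_INR n). lra. lra. }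
      assert (c ^ k * ((INR n + 1) * (K + 1)) < eps).
      { apply Rmult_lt_reg_r with (/ ((INR n + 1) * (K + 1))).
        apply Rinv_0_lt_compat; auto. rewrite Rmult_assoc, Rinv_r; lra. }
      pose proof (cpos k). pose proof (pos_INR n).
      assert ((INR n + 1) * (K * c ^ k) <= c ^ k * ((INR n + 1) * (K + 1))).
      { assert (0 <= (INR n + 1) * c ^ k) by nra. nra. }
      lra. }
    assert (Eq : (INR n + 1) * (K * c ^ k) = INR n * (K * c ^ k) + K * c ^ k) by ring. set (q := K * c ^ k) in *. set (w := INR n * q) in *. assert (0 <= q) by (unfold q; apply Rmult_le_pos; auto). apply Rabs_def1; lra.
  - intro i. apply Plow.
  - intros eps He.
    assert (Hy : 0 < eps / (D0 + 1)) by (apply Rdiv_lt_0_compat; lra).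
    destruct (pow_lt_1_zero c Habs _ Hy) as [N0 HN0].
    exists N0. intros i Hi. specialize (HN0 (S i) ltac:(lia)).
    rewrite Rabs_right in HN0 by (apply Rle_ge, cpos).
    specialize (Dbound (S i)). fold (D (s (S i))).
    assert (c ^ S i * (D0 + 1) < eps).
    { apply Rmult_lt_reg_r with (/ (D0 + 1)).
      apply Rinv_0_lt_compat; lra. rewrite Rmult_assoc, Rinv_r; lra. }
    pose proof (cpos (S i)). nra.
Qed.
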